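(* Let $G$ be a finite group acting on a complex abelian variety $A$, and let $H\le G$. Let $H_1,\dots,H_s$ be the double cosets of $H$ in $G$, and $q_i:=\frac1{|H|}\sum_{y\in H_i}y$. Let $V$ be an irreducible complex representation of $G$ with $\dim V^H=1$ and $\chi_V$ rational-valued, with associated irreducible rational representation $W$. Then $\chi_V(q_i)\in\mathbb{Z}$ for all $i$, and $$q_i(z)=\chi_V(q_i)\,z\quad\text{for all } z\in A_{H,\widetilde W}\text{ and all } i=1,\dots,s.$$
   Context: The action of $G$ on $A$ induces an algebra homomorphism $\mathbb{Q}[G]\to\mathrm{End}_{\mathbb Q}(A)$. Elements of $\mathbb{Q}[G]$ are identified with their images. Set $p_H:=\frac1{|H|}\sum_{h\in H}h$ and $A_H:=\mathrm{Im}(np_H)$ for a suitable positive integer $n$; the $q_i$ act as endomorphisms of $A_H$. $\chi_V$ is extended linearly to $\mathbb{Q}[G]$. Define $e_W:=\frac{\dim V}{|G|}\sum_{g}\chi_V(g^{-1})g$, $f_{H,\widetilde W}:=p_He_W$, and $A_{H,\widetilde W}:=\mathrm{Im}(f_{H,\widetilde W})$, with $\mathrm{Im}(\alpha)=\mathrm{Im}(n\alpha)$ for any positive integer $n$ making $n\alpha$ an endomorphism. *)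

(* Defs.v *)
From HB Require Import structures.
From mathcomp Require Import all_boot all_order all_algebra all_fingroup all_solvable all_field all_character.
Set Implicit Arguments. Unset Strict Implicit. Unset Printing Implicit Defensive.
Import GRing.Theory Num.Theory.
Local Open Scope ring_scope.

(* Elements of the group algebra C[G] (here with algC coefficients, which
   contains Q[G]) are represented by their coefficient functions gT -> algC;
   only the values on G matter. *)

Definition ga_mul (gT : finGroupType) (G : {set gT}) (a b : gT -> algC) : gT -> algC :=
  fun g => \sum_(x in G) a x * b (x^-1 * g)%g.

Definition pH (gT : finGroupType) (H : {set gT}) : gT -> algC :=
  fun g => if g \in H then (#|H|%:R)^-1 else 0.

Definition eW (gT : finGroupType) (G : {group gT}) (chi : 'CF(G)) : gT -> algC :=
  fun g => if g \in G then chi 1%g / #|G|%:R * chi (g^-1)%g else 0.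

Definition fHW (gT : finGroupType) (G H : {group gT}) (chi : 'CF(G)) : gT -> algC :=
  ga_mul G (pH H) (eW chi).

Definition dcoset (gT : finGroupType) (H : {set gT}) (x : gT) : {set gT} :=
  (H :* x * H)%g.

Definition qelt (gT : finGroupType) (H D : {set gT}) : gT -> algC :=
  fun g => if g \in D then (#|H|%:R)^-1 else 0.

Definition cf_lin (gT : finGroupType) (G : {group gT}) (chi : 'CF(G)) (a : gT -> algC) : algC :=
  \sum_(g in G) a g * chi g.

(* action of q_D = 1/|H| sum_{y in D} y on an H-invariant element z (e.g. z in
   A_H): since D is a union of left cosets yH and z is H-fixed, this equals
   sum over the left cosets C of H in D of (repr C) z. *)
Definition qD_act (gT : finGroupType) (A : zmodType) (rho : gT -> A -> A)
  (H D : {set gT}) (z : A) : A :=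
  \sum_(C in lcosets H D) rho (repr C) z.

(* Main.v *)
Require Import Defs.
From HB Require Import structures.
From mathcomp Require Import all_boot all_order all_algebra all_fingroup all_solvable all_field all_character.
From mathcomp Require Import ring.
Import GRing.Theory Num.Theory.
Local Open Scope ring_scope.

Lemma rank1_aux d r (U : 'M[algC]_(d, r)) (V : 'M_(r, d)) (Q : 'M_d) :
  row_full U -> row_free V -> (U *m V) *m (U *m V) = U *m V ->
  \tr (U *m V) = 1 -> exists s, (U *m V) *m Q *m (U *m V) = s *: (U *m V).
Proof.
move=> fU fV PP trP.
have VU : V *m U = 1%:M.
  apply: (row_free_inj fV); rewrite /= mul1mx.
  apply: (row_full_inj fU); by rewrite !mulmxA -[U *m V *m U *m V]mulmxA PP.
have r1 : r = 1%N.
  by apply/eqP; rewrite -(pnatr_eq1 algC) -mxtrace1 -VU mxtrace_mulC trP.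
subst r; exists ((V *m Q *m U) 0 0).
have -> : U *m V *m Q *m (U *m V) = U *m (V *m Q *m U) *m V by rewrite !mulmxA.
by rewrite {1}[V *m Q *m U]mx11_scalar mul_mx_scalar scalemxAl.
Qed.

Lemma rank1_proj d (P Q : 'M[algC]_d) :
  P *m P = P -> \tr P = 1 -> exists s, P *m Q *m P = s *: P.
Proof.
rewrite -(mulmx_base P).
exact: rank1_aux (col_base_full P) (row_base_free P).
Qed.

Lemma dcosetP (gT : finGroupType) (H : {group gT}) x y :
  reflect (exists h1, exists h2, [/\ h1 \in H, h2 \in H & y = (h1 * x * h2)%g])
          (y \in dcoset H x).
Proof.
apply: (iffP mulsgP) => [[a b aHx bH ->]|[h1 [h2 [h1H h2H ->]]]].
  exists (a * x^-1)%g, b; split => //; first by rewrite -mem_rcoset.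
  by rewrite mulgKV.
by exists (h1 * x)%g h2 => //; rewrite mem_rcoset mulgK.
Qed.

Lemma dcosetMl (gT : finGroupType) (H : {group gT}) x y h :
  h \in H -> ((h * y)%g \in dcoset H x) = (y \in dcoset H x).
Proof.
move=> hH; apply/dcosetP/dcosetP => [[h1 [h2 [h1H h2H E]]]|[h1 [h2 [h1H h2H ->]]]].
  exists (h^-1 * h1)%g, h2; split; rewrite ?groupM ?groupV //.
  by apply: (mulgI h); rewrite E !mulgA mulgV mul1g.
by exists (h * h1)%g, h2; split; rewrite ?groupM // !mulgA.
Qed.

Lemma dcosetMr (gT : finGroupType) (H : {group gT}) x y h :
  h \in H -> ((y * h)%g \in dcoset H x) = (y \in dcoset H x).
Proof.
move=> hH; apply/dcosetP/dcosetP => [[h1 [h2 [h1H h2H E]]]|[h1 [h2 [h1H h2H ->]]]].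
  exists h1, (h2 * h^-1)%g; split; rewrite ?groupM ?groupV //.
  by rewrite mulgA -E mulgK.
by exists h1, (h2 * h)%g; split; rewrite ?groupM // !mulgA.
Qed.

Lemma dcoset_sub (gT : finGroupType) (G H : {group gT}) x y :
  H \subset G -> x \in G -> y \in dcoset H x -> y \in G.
Proof.
move=> sHG xG /dcosetP[h1 [h2 [h1H h2H ->]]].
by rewrite !groupM // (subsetP sHG).
Qed.

Lemma sum_mull (gT : finGroupType) (R : zmodType) (S : {set gT}) g (F : gT -> R) :
  (forall y, ((g * y)%g \in S) = (y \in S)) ->
  \sum_(y in S) F (g * y)%g = \sum_(y in S) F y.
Proof.
move=> hS; rewrite (reindex_inj (mulgI (g^-1)%g)) /=.
apply: eq_big => y; last by rewrite mulKVg.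
by rewrite -[in RHS](mulKVg g y) hS.
Qed.

Lemma sum_mulr (gT : finGroupType) (R : zmodType) (S : {set gT}) g (F : gT -> R) :
  (forall y, ((y * g)%g \in S) = (y \in S)) ->
  \sum_(y in S) F (y * g)%g = \sum_(y in S) F y.
Proof.
move=> hS; rewrite (reindex_inj (mulIg (g^-1)%g)) /=.
apply: eq_big => y; last by rewrite mulgKV.
by rewrite -[in RHS](mulgKV g y) hS.
Qed.

Lemma sum_lcosets (gT : finGroupType) (R : zmodType) (H : {group gT}) (D : {set gT})
  (F : gT -> R) :
  (forall y h, h \in H -> ((y * h)%g \in D) = (y \in D)) ->
  \sum_(C in lcosets H D) \sum_(h in H) F (repr C * h)%g = \sum_(y in D) F y.
Proof.
move=> hD.
rewrite (partition_big (fun y => y *: H)%g (mem (lcosets H D))) /=; last first.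
  by move=> y yD; apply/lcosetsP; exists y.
apply: eq_bigr => C /lcosetsP[x xD ->].
have rC : repr (x *: H)%g \in (x *: H)%g := mem_repr _ (lcoset_refl H x).
have -> : \sum_(y in D | (y *: H == x *: H)%g) F y = \sum_(y in (x *: H)%g) F y.
  apply: eq_bigl => y; apply/andP/idP => [[_ /eqP <-]|yxH].
    exact: lcoset_refl.
  split; last by apply/eqP/lcoset_eqP.
  have /lcosetP[h hH ->] := yxH; by rewrite hD.
move: rC; set r := repr _ => /lcoset_eqP <-.
rewrite -lcosetE big_imset //=.
by move=> a b _ _ /mulgI.
Qed.

Lemma key_mx (gT : finGroupType) (G H : {group gT}) n (rG : mx_representation algC G n) x :
  H \subset G -> x \in G -> '['Res[H] (cfRepr rG), 1]_H = 1 ->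
  \sum_(y in dcoset H x) rG y =
    (#|H|%:R^-1 * \tr (\sum_(y in dcoset H x) rG y)) *: \sum_(h in H) rG h.
Proof.
move=> sHG xG dimVH.
set D := dcoset H x.
have DG y : y \in D -> y \in G by exact: dcoset_sub.
have HG h : h \in H -> h \in G by move/(subsetP sHG).
set SH := \sum_(h in H) rG h; set SD := \sum_(y in D) rG y.
have nH : #|H|%:R != 0 :> algC := natrG_neq0 _ _.
have SHSH : SH *m SH = #|H|%:R *: SH.
  rewrite mulmx_suml scaler_nat -sumr_const; apply: eq_bigr => h hH.
  rewrite mulmx_sumr -[RHS](@sum_mull _ _ H h); last by move=> y; rewrite groupMl.
  by apply: eq_bigr => h' h'H; rewrite repr_mxM ?HG.
have SHSD : SH *m SD = #|H|%:R *: SD.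
  rewrite mulmx_suml scaler_nat -sumr_const; apply: eq_bigr => h hH.
  rewrite mulmx_sumr -[RHS](@sum_mull _ _ D h); last by move=> y; rewrite dcosetMl.
  by apply: eq_bigr => y yD; rewrite repr_mxM ?(HG h) ?(DG y).
have SDSH : SD *m SH = #|H|%:R *: SD.
  rewrite mulmx_suml scaler_nat -sumr_const.
  under eq_bigr => y yD do rewrite /SH mulmx_sumr.
  rewrite exchange_big; apply: eq_bigr => h hH.
  rewrite -[RHS](@sum_mulr _ _ D h); last by move=> y; rewrite dcosetMr.
  by apply: eq_bigr => y yD; rewrite repr_mxM ?(HG h) ?(DG y).
have trSH : \tr SH = #|H|%:R.
  move: dimVH; rewrite cfdotE /SH raddf_sum /=.
  under eq_bigr => h hH do rewrite cfResE // cfun1E hH conjC1 mulr1 cfunE HG // mulr1n.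
  by move/(canRL (mulKf (invr_neq0 nH))); rewrite mulr1 invrK.
pose P := #|H|%:R^-1 *: SH.
have PP : P *m P = P.
  rewrite /P -scalemxAl -scalemxAr SHSH scalerA scalerA.
  by rewrite mulrC mulrA mulfV // mul1r.
have trP : \tr P = 1 by rewrite mxtraceZ trSH mulVf.
have [s Hs] := @rank1_proj _ _ SD PP trP.
have PSDP : P *m SD *m P = SD.
  rewrite /P -scalemxAl -scalemxAr -scalemxAl SHSD -scalemxAl SDSH !scalerA.
  by rewrite (_ : _ * _ = 1) ?scale1r //; field.
have eSD : SD = (s / #|H|%:R) *: SH by rewrite -PSDP Hs scalerA.
have -> : #|H|%:R^-1 * \tr SD = s / #|H|%:R.
  by rewrite {1}eSD mxtraceZ trSH; field.
exact: eSD.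
Qed.

Lemma cfReprE' (gT : finGroupType) (G : {group gT}) n (rG : mx_representation algC G n) x :
  x \in G -> cfRepr rG x = \tr (rG x).
Proof. by rewrite cfunE => ->. Qed.

Lemma cfReprM (gT : finGroupType) (G : {group gT}) n (rG : mx_representation algC G n) x y :
  x \in G -> y \in G -> cfRepr rG (x * y)%g = \tr (rG x *m rG y).
Proof. by move=> xG yG; rewrite cfReprE' ?groupM // repr_mxM. Qed.

Lemma key_fun (gT : finGroupType) (G H : {group gT}) n (rG : mx_representation algC G n) x :
  H \subset G -> x \in G -> '['Res[H] (cfRepr rG), 1]_H = 1 ->
  forall j : gT,
  \sum_(C in lcosets H (dcoset H x))
     \sum_(h in H) cfRepr rG ((((repr C)^-1 * j)^-1)%g * h)%g =
  (#|H|%:R^-1 * \sum_(y in dcoset H x) cfRepr rG y) *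
     \sum_(h in H) cfRepr rG ((j^-1)%g * h)%g.
Proof.
move=> sHG xG dimVH j.
set D := dcoset H x.
have DG y : y \in D -> y \in G by exact: dcoset_sub.
have HG h : h \in H -> h \in G by move/(subsetP sHG).
under eq_bigr => C _ do under eq_bigr => h _ do rewrite invMg invgK -mulgA.
rewrite (@sum_lcosets _ _ H D (fun y => cfRepr rG ((j^-1)%g * y)%g)); last first.
  by move=> y h hH; rewrite dcosetMr.
have [jG|njG] := boolP (j \in G); last first.
  have z y : y \in G -> cfRepr rG ((j^-1)%g * y)%g = 0.
    by move=> yG; rewrite cfun0 // groupMr // groupV.
  rewrite big1 ?[X in _ * X]big1 ?mulr0 // => y yH.
    exact/z/HG.
  exact/z/DG.
have jG' : (j^-1)%g \in G by rewrite groupV.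
have E := @key_mx _ _ _ _ rG _ sHG xG dimVH.
have trSD : \tr (\sum_(y in D) rG y) = \sum_(y in D) cfRepr rG y.
  by rewrite raddf_sum; apply: eq_bigr => y yD; rewrite cfunE DG.
rewrite -trSD.
transitivity (\tr (rG (j^-1)%g *m \sum_(y in D) rG y)).
  rewrite mulmx_sumr raddf_sum; apply: eq_bigr => y yD.
  by rewrite cfReprM ?(DG y).
rewrite {1}E -scalemxAr mxtraceZ; congr (_ * _).
rewrite mulmx_sumr raddf_sum; apply: eq_bigr => y yH.
by rewrite cfReprM ?(HG y).
Qed.

Lemma fHW_phi (gT : finGroupType) (G H : {group gT}) (chi : 'CF(G)) a :
  H \subset G -> a \in G ->
  fHW H chi a = (#|H|%:R^-1 * (chi 1%g / #|G|%:R)) *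
                \sum_(h in H) chi ((a^-1)%g * h)%g.
Proof.
move=> sHG aG; rewrite /fHW /ga_mul (big_setID H) /= (setIidPr sHG).
rewrite [X in _ + X]big1 ?addr0; last first.
  by move=> y; rewrite inE => /andP[/negPf yH _]; rewrite /pH yH mul0r.
rewrite mulr_sumr; apply: eq_bigr => h hH.
rewrite /pH /eW hH groupM ?groupV ?(subsetP sHG h hH) //.
rewrite mulrA; congr (_ * chi _); by rewrite invMg invgK.
Qed.

Lemma sum_chiH (gT : finGroupType) (G H : {group gT}) (chi : 'CF(G)) :
  H \subset G -> '['Res[H] chi, 1]_H = 1 -> \sum_(h in H) chi h = #|H|%:R.
Proof.
move=> sHG; rewrite cfdotE.
under eq_bigr => h hH do rewrite cfResE // cfun1E hH conjC1 mulr1.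
have nH : #|H|%:R != 0 :> algC := natrG_neq0 _ _.
by move/(canRL (mulKf (invr_neq0 nH))); rewrite mulr1 invrK.
Qed.

Lemma cf_lin_q (gT : finGroupType) (G H : {group gT}) (chi : 'CF(G)) x :
  H \subset G -> x \in G ->
  cf_lin chi (qelt H (dcoset H x)) = #|H|%:R^-1 * \sum_(y in dcoset H x) chi y.
Proof.
move=> sHG xG.
have DG : dcoset H x \subset G by apply/subsetP => y; exact: dcoset_sub.
rewrite /cf_lin (big_setID (dcoset H x)) /= (setIidPr DG).
rewrite [X in _ + X]big1 ?addr0; last first.
  by move=> y; rewrite inE => /andP[/negPf yD _]; rewrite /qelt yD mul0r.
by rewrite mulr_sumr; apply: eq_bigr => y yD; rewrite /qelt yD.
Qed.

Lemma Aint_eig (gT : finGroupType) (H : {group gT}) (D : {set gT}) (phi : gT -> algC) lam :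
  (forall j, \sum_(C in lcosets H D) phi ((repr C)^-1 * j)%g = lam * phi j) ->
  phi 1%g != 0 -> lam \in Aint.
Proof.
move=> Hphi nz.
pose ev : 'I_#|gT| -> gT := enum_val.
pose A : 'M[int]_#|gT| :=
  \matrix_(i, j) (\sum_(C in lcosets H D) ((repr C * ev i)%g == ev j) : nat)%:Z.
apply: (@root_monic_Aint (char_poly (map_mx intr A))).
- rewrite -eigenvalue_root_char; apply/eigenvalueP.
  exists (\row_j phi (ev j)); last first.
    apply/eqP => /rowP/(_ (enum_rank 1%g)); rewrite !mxE /ev enum_rankK.
    by apply/eqP.
  apply/rowP => j; rewrite !mxE -Hphi.
  under eq_bigr => i _ do rewrite !mxE -pmulrn natr_sum mulr_sumr.
  rewrite exchange_big /=; apply: eq_bigr => C _.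
  pose i0 := enum_rank ((repr C)^-1 * ev j)%g.
  rewrite (bigD1 i0) //= big1 ?addr0.
    by rewrite /ev /i0 enum_rankK mulKVg eqxx mulr1.
  move=> i ni0; case: eqP => [E|_]; last by rewrite mulr0.
  case/eqP: ni0; rewrite /i0 -E mulKg /ev enum_valK //.
- exact: char_poly_monic.
- rewrite -map_char_poly; apply/polyOverP => k; rewrite coef_map /=.
  exact: rpred_int.
Qed.

Theorem lemma4p4 (gT : finGroupType) (G H : {group gT}) (A : zmodType)
  (rho : gT -> A -> A)
  (rho_add : forall g, g \in G -> forall x y, rho g (x + y) = rho g x + rho g y)
  (rho1 : forall a, rho 1%g a = a)
  (rhoM : forall g h a, g \in G -> h \in G -> rho (g * h)%g a = rho g (rho h a))
  (sHG : H \subset G)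
  (i : Iirr G)
  (dimVH : '['Res[H] 'chi_i, 1]_H = 1)
  (rat_chi : forall g, 'chi_i g \in Crat) :
  forall x, x \in G ->
    exists c : int,
      cf_lin 'chi_i (qelt H (dcoset H x)) = c%:~R /\
      forall (n : nat) (b : gT -> int),
        (0 < n)%N ->
        (forall g, g \in G -> (b g)%:~R = n%:R * fHW H 'chi_i g) ->
        forall (w z : A), z = \sum_(g in G) rho g w *~ b g ->
          qD_act rho H (dcoset H x) z = z *~ c.
Proof.
move=> x xG.
set D := dcoset H x.
pose lam := #|H|%:R^-1 * \sum_(y in D) 'chi_i y.
have key : forall j, \sum_(C in lcosets H D)
     \sum_(h in H) 'chi_i ((((repr C)^-1 * j)^-1)%g * h)%g =
     lam * \sum_(h in H) 'chi_i ((j^-1)%g * h)%g.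
  move=> j; have := @key_fun _ G H _ 'Chi_i x sHG xG.
  by rewrite irrRepr => /(_ dimVH j).
have lamA : lam \in Aint.
  apply: (@Aint_eig _ H D (fun a => \sum_(h in H) 'chi_i ((a^-1)%g * h)%g) lam key).
  under eq_bigr => h _ do rewrite invg1 mul1g.
  by rewrite (@sum_chiH _ G H _ sHG dimVH) natrG_neq0.
have lamQ : lam \in Crat.
  by rewrite rpredM ?rpredV ?rpred_nat // rpred_sum.
have /intrP[c Ec] := Cint_rat_Aint lamQ lamA.
exists c; split; first by rewrite cf_lin_q // -Ec.
move=> n b n0 hb w z ->.
have rho0 g : g \in G -> rho g 0 = 0.
  by move=> gG; apply: (addrI (rho g 0)); rewrite -rho_add // !addr0.
have rhoN g a : g \in G -> rho g (- a) = - rho g a.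
  by move=> gG; apply: (addrI (rho g a)); rewrite -rho_add // !subrr rho0.
have rhoMn g a m : g \in G -> rho g (a *+ m) = rho g a *+ m.
  move=> gG; elim: m => [|m IH]; first by rewrite !mulr0n rho0.
  by rewrite !mulrS rho_add // IH.
have rhoMz g a k : g \in G -> rho g (a *~ k) = rho g a *~ k.
  move=> gG; case: k => m; first by rewrite -!pmulrn (rhoMn g a m gG).
  by rewrite NegzE !mulrNz -!pmulrn rhoN // (rhoMn g a m.+1 gG).
have rCG C : C \in lcosets H D -> repr C \in G.
  move=> /lcosetsP[y yD ->]; have := mem_repr _ (lcoset_refl H y).
  case/lcosetP => h hH ->; rewrite groupM //; last exact: (subsetP sHG).
  exact: (@dcoset_sub _ G H x y sHG xG yD).
rewrite /qD_act.
have E1 C : C \in lcosets H D -> rho (repr C) (\sum_(g in G) rho g w *~ b g) =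
    \sum_(g in G) rho g w *~ b ((repr C)^-1 * g)%g.
  move=> /rCG rG.
  rewrite (big_morph (rho (repr C)) (rho_add _ rG) (rho0 _ rG)).
  rewrite -[RHS](@sum_mull _ _ G (repr C)); last by move=> y; rewrite groupMl.
  by apply: eq_bigr => g gG; rewrite rhoMz // -rhoM // mulKg.
rewrite (eq_bigr _ E1) exchange_big mulrz_suml; apply: eq_bigr => g gG.
rewrite -mulrz_sumr -mulrzA; congr (_ *~ _).
apply: (@intr_inj algC); rewrite rmorph_sum rmorphM /= hb // -Ec.
have rG' C : C \in lcosets H D -> ((repr C)^-1 * g)%g \in G.
  by move=> CD; rewrite groupM ?groupV ?rCG.
under eq_bigr => C CD do rewrite hb ?rG' // fHW_phi ?rG' //.
rewrite fHW_phi // -mulr_sumr -mulr_sumr key.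
ring.
Qed.
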